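(* Let $G=(V_1\cup V_2,E)$ be a regular bipartite graph with stable sets satisfying $|V_1|=|V_2|=n$. If $G$ is not a mirror bipartite graph, then $n\ge 6$.
   Context: A bipartite graph $G=(V_1\cup V_2,E)$ with stable sets $V_1,V_2$ is mirror if there is a bijection $\varphi:V_1\to V_2$ such that for all $u,v\in V_1$, $u\varphi(v)\in E$ if and only if $\varphi(u)v\in E$. *)

(* Defs.v *)
From mathcomp Require Import all_boot.
Set Implicit Arguments. Unset Strict Implicit. Unset Printing Implicit Defensive.

(* A bipartite graph with stable sets V1, V2 (finite types) is given by its
   edge relation E : V1 -> V2 -> bool ; u v are adjacent iff E u v. *)

Definition bip_regular (V1 V2 : finType) (E : V1 -> V2 -> bool) : Prop :=
  exists k : nat,
    (forall u : V1, #|[set v : V2 | E u v]| = k) /\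
    (forall v : V2, #|[set u : V1 | E u v]| = k).

(* Mirror: a bijection phi : V1 -> V2 with u phi(v) in E <-> phi(u) v in E,
   i.e. E u (phi v) = E v (phi u) (the edge phi(u)v joins v in V1 to phi(u) in V2). *)
Definition mirror (V1 V2 : finType) (E : V1 -> V2 -> bool) : Prop :=
  exists phi : V1 -> V2, bijective phi /\
    (forall u v : V1, E u (phi v) = E v (phi u)).

(* Main.v *)
Require Import Defs.
From mathcomp Require Import all_boot.

Set Implicit Arguments. Unset Strict Implicit. Unset Printing Implicit Defensive.

Fixpoint tuples (T : Type) (L : seq T) (n : nat) : seq (seq T) :=
  if n is m.+1 then [seq x :: t | x <- L, t <- tuples L m] else [:: [::]].

Lemma mem_tuples (T : eqType) (L : seq T) n s :
  (s \in tuples L n) = (size s == n) && all (fun x => x \in L) s.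
Proof.
elim: n s => [|n IH] [|x s] //=; rewrite ?inE //.
- by apply/allpairsP => -[[a b] [_ _]].
- apply/allpairsP/idP => [[[a b] /= [aL bT [-> ->]]]|].
    by move: bT; rewrite IH eqSS aL => /andP[-> ->].
  rewrite eqSS => /andP[sz /andP[xL aL]].
  by exists (x, s); split => //=; rewrite IH sz.
Qed.

Fixpoint allt (T : Type) (L : seq T) (n : nat) (P : seq T -> bool) : bool :=
  if n is m.+1 then all (fun x => allt L m (fun t => P (x :: t))) L else P [::].

Lemma alltP (T : eqType) (L : seq T) n P s :
  allt L n P -> size s = n -> all (fun x => x \in L) s -> P s.
Proof.
elim: n P s => [|n IH] P [|x s] //= H [sz] /andP[xL sL].
exact: (IH _ s (allP H x xL) sz sL).
Qed.

Definition get (M : seq (seq bool)) (i j : nat) := nth false (nth [::] M i) j.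

Definition symb (M : seq (seq bool)) (es : seq nat) (p : seq nat) :=
  all (fun u => all (fun v =>
     get M u (nth 0 p v) == get M v (nth 0 p u)) es) es.

Definition colreg (es : seq nat) M k :=
  all (fun j => count (fun i => get M i j) es == k) es.

Definition check n :=
  let es := iota 0 n in
  let ps := permutations es in
  all (fun k => allt [seq r <- tuples [:: true; false] n | count id r == k] n
     (fun M => if colreg es M k then has (symb M es) ps else true))
     (iota 0 n.+1).

Lemma count_card (T : finType) (P : pred T) : count P (enum T) = #|[set x | P x]|.
Proof. by rewrite cardsE cardE -size_filter enumT -deprecated_filter_index_enum. Qed.

Lemma check_sound n (f : 'I_n -> 'I_n -> bool) k :
  check n -> (forall i, #|[set j | f i j]| = k) -> (forall j, #|[set i | f i j]| = k) ->
  exists phi : 'I_n -> 'I_n, bijective phi /\ forall u v, f u (phi v) = f v (phi u).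
Proof.
case: n f => [|n] f chk Hr Hc.
  exists id; split; last by case.
  by exists id.
have kn : k < n.+2.
  by rewrite ltnS -(Hr ord0) -[X in _ <= X](card_ord n.+1) max_card.
pose M := [seq [seq f i j | j <- enum 'I_n.+1] | i <- enum 'I_n.+1].
have getM : forall i j : 'I_n.+1, get M i j = f i j.
  move=> i j; rewrite /get /M (nth_map i) ?size_enum_ord // nth_ord_enum.
  by rewrite (nth_map j) ?size_enum_ord // nth_ord_enum.
move: chk; rewrite /check => /allP /(_ k).
rewrite mem_iota add0n => /(_ kn) /(alltP (s:=M)).
rewrite size_map size_enum_ord => /(_ erefl).
have HM : all (fun x => x \in [seq r <- tuples [:: true; false] n.+1 | count id r == k]) M.
  apply/allP => r /mapP [i _ ->].
  rewrite mem_filter mem_tuples size_map size_enum_ord eqxx /= count_map.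
  rewrite count_card Hr eqxx /=.
  by apply/allP => b _; case: b.
move=> /(_ HM).
have -> : colreg (iota 0 n.+1) M k.
  apply/allP => j; rewrite mem_iota add0n => jlt.
  have -> : j = nat_of_ord (Ordinal jlt) by [].
  rewrite -val_enum_ord count_map.
  rewrite (eq_count (a2 := fun i => f i (Ordinal jlt))); last by move=> i; exact: getM.
  by rewrite count_card Hc.
move=> /hasP [p]; rewrite mem_permutations => pe /allP sy.
have szp : size p = n.+1 by rewrite (perm_size pe) size_iota.
have up : uniq p by rewrite (perm_uniq pe) iota_uniq.
have ltp : forall i : 'I_n.+1, nth 0 p i < n.+1.
  move=> i; have : nth 0 p i \in iota 0 n.+1.
    by rewrite -(perm_mem pe) mem_nth // szp.
  by rewrite mem_iota.
have phiv : forall i : 'I_n.+1, nat_of_ord (inord (nth 0 p i) : 'I_n.+1) = nth 0 p i.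
  by move=> i; rewrite inordK.
exists (fun i => inord (nth 0 p i)); split.
  apply: injF_bij => i j /= e.
  apply/val_inj/eqP.
  rewrite -(nth_uniq 0 _ _ up) ?szp ?ltn_ord //.
  by rewrite -(phiv i) -(phiv j) e.
move=> u v.
have := sy u; rewrite mem_iota ltn_ord => /(_ isT) /allP /(_ v).
rewrite mem_iota ltn_ord => /(_ isT) /eqP.
by rewrite -!getM !phiv.
Qed.

Lemma check0 : check 0. Proof. vm_compute. reflexivity. Qed.
Lemma check1 : check 1. Proof. vm_compute. reflexivity. Qed.
Lemma check2 : check 2. Proof. vm_compute. reflexivity. Qed.
Lemma check3 : check 3. Proof. vm_compute. reflexivity. Qed.
Lemma check4 : check 4. Proof. vm_compute. reflexivity. Qed.
Lemma check5 : check 5. Proof. vm_compute. reflexivity. Qed.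

Lemma check_small m : m < 6 -> check m.
Proof.
case: m => [|[|[|[|[|[|m]]]]]] H.
- exact: check0.
- exact: check1.
- exact: check2.
- exact: check3.
- exact: check4.
- exact: check5.
- by [].
Qed.

Theorem proposition1 (V1 V2 : finType) (E : V1 -> V2 -> bool) (n : nat) :
  #|V1| = n -> #|V2| = n -> bip_regular E -> ~ mirror E -> 6 <= n.
Proof.
move=> H1 H2 [k [Hr Hc]] Hnm.
rewrite leqNgt; apply/negP => Hn; apply: Hnm.
have chk : check n by apply: check_small.
pose e1 (i : 'I_n) : V1 := enum_val (cast_ord (esym H1) i).
pose g1 (u : V1) : 'I_n := cast_ord H1 (enum_rank u).
pose e2 (i : 'I_n) : V2 := enum_val (cast_ord (esym H2) i).
pose g2 (u : V2) : 'I_n := cast_ord H2 (enum_rank u).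
have e1K : forall u, e1 (g1 u) = u by move=> u; rewrite /e1 /g1 cast_ordK enum_rankK.
have g1K : forall i, g1 (e1 i) = i by move=> i; rewrite /e1 /g1 enum_valK cast_ordKV.
have e2K : forall u, e2 (g2 u) = u by move=> u; rewrite /e2 /g2 cast_ordK enum_rankK.
have g2K : forall i, g2 (e2 i) = i by move=> i; rewrite /e2 /g2 enum_valK cast_ordKV.
have card1 : forall P : pred V1, #|[set j | P (e1 j)]| = #|[set v | P v]|.
  move=> P; rewrite -(card_imset _ (can_inj g1K)); apply: eq_card => v.
  rewrite [in RHS]inE; apply/imsetP/idP => [[j]|Pv].
    by rewrite inE => Pj ->.
  by exists (g1 v); rewrite ?inE e1K.
have card2 : forall P : pred V2, #|[set j | P (e2 j)]| = #|[set v | P v]|.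
  move=> P; rewrite -(card_imset _ (can_inj g2K)); apply: eq_card => v.
  rewrite [in RHS]inE; apply/imsetP/idP => [[j]|Pv].
    by rewrite inE => Pj ->.
  by exists (g2 v); rewrite ?inE e2K.
have [phi' [bphi' Hs]] := @check_sound n (fun i j => E (e1 i) (e2 j)) k chk
  (fun i => etrans (card2 (E (e1 i))) (Hr (e1 i)))
  (fun j => etrans (card1 (fun u => E u (e2 j))) (Hc (e2 j))).
exists (e2 \o (phi' \o g1)); split.
  apply: bij_comp; first by exists g2.
  apply: bij_comp => //; by exists e1.
move=> u v /=.
by have := Hs (g1 u) (g1 v); rewrite !e1K.
Qed.
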